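(* Let $n\geq 3$ be an integer and $p$ a prime with $\gcd(n,p(p-1))=1$. (1) Let $F(x,y)=ax^n+by^n$ with $a,b$ integers, $ab\neq 0$, and $\nu_p(a)\equiv\nu_p(b)\pmod n$. Then $R(F)$ is dense in $\mathbb{Q}_p$. (2) Let $r\geq 2$ and $F(x_1,\ldots,x_r)=a_1x_1^n+a_2x_2^n+\cdots+a_rx_r^n$ with $a_1,\ldots,a_r$ integers, $a_1a_2\cdots a_r\neq 0$, such that $\nu_p(a_i)\equiv\nu_p(a_j)\pmod n$ for some $1\leq i<j\leq r$. Then $R(F)$ is dense in $\mathbb{Q}_p$.
   Context: For an integral form $F$ in $r$ variables, $R(F)=\{F(\overline{x})/F(\overline{y}):\overline{x},\overline{y}\in\mathbb{Z}^r,\ F(\overline{y})\neq 0\}$, viewed as a subset of the field $\mathbb{Q}_p$ of $p$-adic numbers with its $p$-adic topology. $\nu_p$ denotes the $p$-adic valuation. *)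

(* Defs.v *)
From mathcomp Require Import all_boot all_order all_algebra.
Set Implicit Arguments. Unset Strict Implicit. Unset Printing Implicit Defensive.
Import Order.TTheory GRing.Theory Num.Theory.
Local Open Scope ring_scope.

(* p-adic valuation of a rational number (nu_p(0) := 0 by convention;
   it is only used on nonzero arguments below). *)
Definition padic_val (p : nat) (q : rat) : int :=
  (logn p `|numq q|%N)%:Z - (logn p `|denq q|%N)%:Z.

Definition zval (p : nat) (a : int) : nat := logn p `|a|%N.

Definition ratio_set (r : nat) (F : ('I_r -> int) -> int) : rat -> Prop :=
  fun s => exists (x y : 'I_r -> int), F y != 0 /\ s = (F x)%:~R / (F y)%:~R.

(* Since Q is dense in Q_p, this is
   equivalent to: every rational q is a p-adic limit of elements of S, i.e.
   for each q and each k there is s in S with s = q or nu_p(s - q) >= k. *)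
Definition dense_in_Qp (p : nat) (S : rat -> Prop) : Prop :=
  forall (q : rat) (k : int), exists s, S s /\ (s = q \/ k <= padic_val p (s - q)).

Definition diag_form (r n : nat) (a : 'I_r -> int) (x : 'I_r -> int) : int :=
  \sum_(i < r) a i * x i ^+ n.

Definition binary_form (n : nat) (a b : int) (x : 'I_2 -> int) : int :=
  a * x ord0 ^+ n + b * x ord_max ^+ n.

(* Main.v *)
Require Import Defs.
From mathcomp Require Import all_boot all_order all_algebra.
From mathcomp Require Import cyclic zify ring.
Import Order.TTheory GRing.Theory Num.Theory.
Local Open Scope ring_scope.

Lemma PoszXn (p L : nat) : (p%:Z) ^+ L = (p ^ L)%N%:Z.
Proof. by elim: L => // L IH; rewrite exprS IH expnS PoszM. Qed.

Lemma zpM (p : nat) (x y : int) : prime p ->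
  (p%:Z %| x * y)%Z = (p%:Z %| x)%Z || (p%:Z %| y)%Z.
Proof. by move=> pr; rewrite !dvdzE abszM Euclid_dvdM. Qed.

Lemma zpX (p : nat) (x : int) j : prime p -> (p%:Z %| x ^+ j)%Z -> (p%:Z %| x)%Z.
Proof. by move=> pr; rewrite !dvdzE abszX Euclid_dvdX // => /andP[]. Qed.

Lemma zdecomp (p : nat) (a : int) : prime p -> a != 0 ->
  exists a' : int, ~~ (p%:Z %| a')%Z /\ a = a' * (p%:Z) ^+ (zval p a).
Proof.
move=> pr a0.
have ha : (0 < `|a|)%N by rewrite absz_gt0.
have [m cm hm] := pfactor_coprime pr ha.
exists ((-1) ^+ (a < 0)%R * m%:Z); split.
  rewrite dvdzE abszM abszX /=.
  by rewrite exp1n mul1n -prime_coprime.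
rewrite {1}(intEsign a) /zval {1}hm -mulrA PoszXn -PoszM.
done.
Qed.

Lemma zval_unit (p : nat) (x : int) j : prime p -> ~~ (p%:Z %| x)%Z ->
  zval p (x * (p%:Z) ^+ j) = j.
Proof.
move=> pr hx; rewrite /zval abszM abszX /=.
have x0 : x != 0 by apply: contraNneq hx => ->; exact: dvdz0.
rewrite lognM ?absz_gt0 ?expn_gt0 ?prime_gt0 //.
rewrite logn_coprime ?prime_coprime // lognX logn_prime // eqxx muln1 //.
Qed.

Lemma zEuler (p L : nat) (h : int) : prime p -> ~~ (p%:Z %| h)%Z ->
  (h ^+ totient (p ^ L) = 1 %[mod (p%:Z ^+ L)])%Z.
Proof.
move=> pr hh.
have M0 : forall L, (p ^ L)%N%:Z != 0.
  by move=> L'; rewrite eqz_nat expn_eq0 negb_and; have := prime_gt0 pr; case: (p).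
have cop : coprime `|(h %% (p ^ L)%N%:Z)%Z| (p ^ L).
  case: L => [|L]; first by rewrite expn0 coprimen1.
  rewrite coprime_pexpr // coprime_sym prime_coprime //.
  apply: contra hh => hp.
  rewrite (divz_eq h (p ^ L.+1)%N%:Z).
  apply: rpredD; first by apply: dvdz_mull; rewrite -PoszXn; apply: dvdz_exp => //; exact: dvdzz.
  by rewrite dvdzE.
rewrite PoszXn -modzXm.
have := modz_ge0 h (M0 L); move: cop; set r := (h %% _)%Z => cop r0.
rewrite -(gez0_abs r0) PoszXn.
have := Euler_exp_totient cop; move/(congr1 Posz); rewrite -!modz_nat.
by [].
Qed.

Lemma padic_ratio (p : nat) (m d : int) : m != 0 -> d != 0 ->
  padic_val p (m%:~R / d%:~R) = (zval p m)%:Z - (zval p d)%:Z.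
Proof.
move=> m0 d0; set r : rat := _ / _.
have r0 : r != 0 by rewrite mulf_neq0 ?invr_eq0 ?intr_eq0.
have e : numq r * d = m * denq r.
  apply: (@intr_inj rat).
  rewrite !rmorphM /= numqE /r; field; by rewrite intr_eq0.
have := congr1 (fun z => logn p `|z|) e => /=.
rewrite !abszM !lognM ?absz_gt0 ?numq_eq0 ?denq_neq0 //.
rewrite /padic_val /zval => h; lia.
Qed.

Lemma key_id (a' b' u w Zn Pa Pc Pnm PE Pd PnN : int) :
  Pd * PnN = Pc * Pnm * PE ->
  (a' * Pa * (Pnm * Zn) + b' * (Pa * Pnm)) * (w * Pc) - (u * Pd) * (a' * Pa * PnN)
  = (Pc * Pa * Pnm) * (w * a' * Zn - (u * a' * PE - w * b')).
Proof.
move=> H; apply/eqP; rewrite -subr_eq0.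
have -> : (a' * Pa * (Pnm * Zn) + b' * (Pa * Pnm)) * (w * Pc) - (u * Pd) * (a' * Pa * PnN)
  - (Pc * Pa * Pnm) * (w * a' * Zn - (u * a' * PE - w * b'))
  = u * a' * Pa * (Pc * Pnm * PE - Pd * PnN) by ring.
by rewrite H subrr mulr0.
Qed.

Lemma A1 (d c x y z : nat) : (c <= x)%N ->
  (d + (x + y + z) = c + y + (d + (x + y + z) - c - y))%N.
Proof. lia. Qed.
Lemma A2 (d c x y z : nat) : (0 < z)%N -> (c <= x)%N ->
  (0 < d + (x + y + z) - c - y)%N.
Proof. lia. Qed.
Lemma A3 (al c k x y z : nat) :
  (al + (x + y + z) + c + k = (c + al + y) + (k + (x + y + z) - y))%N.
Proof. lia. Qed.

Lemma A4 (k : int) (x z : nat) : (x + `|k| <= z)%N -> k <= z%:Z - x%:Z.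
Proof. lia. Qed.

Lemma core (n p : nat) (a b : int) (q : rat) (k : int) :
  (0 < n)%N -> prime p -> coprime n p -> coprime n (p.-1) -> a != 0 -> b != 0 ->
  (zval p a <= zval p b)%N -> zval p a = zval p b %[mod n] ->
  exists X Y X' Y' : int, a * X'^+n + b * Y'^+n != 0 /\
   (((a*X^+n + b*Y^+n)%:~R / (a*X'^+n+b*Y'^+n)%:~R : rat) = q \/
     k <= padic_val p ((a*X^+n + b*Y^+n)%:~R / (a*X'^+n+b*Y'^+n)%:~R - q)).
Proof.
move=> n0 pr cnp cnp1 a0 b0 le cong.
have P0 : p%:Z != 0 by rewrite eqz_nat; have := prime_gt0 pr; case: (p).
have n0' : (n == 0%N) = false by case: (n) n0.
have [->|q0] := eqVneq q 0.
  exists 0, 0, 1, 0; rewrite !expr0n !expr1n n0' !mulr0 !mulr1 addr0; split => //.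
  by left; rewrite mul0r.
set P := p%:Z.
have [a' [ha' ea]] := zdecomp _ _ pr a0.
have [b' [hb' eb]] := zdecomp _ _ pr b0.
have [m em] : exists m, zval p b = (zval p a + n * m)%N.
  move: cong => /eqP; rewrite eq_sym eqn_mod_dvd // => /dvdnP [m hm]; exists m; lia.
have u00 : numq q != 0 by rewrite numq_eq0.
have [u [hu eu]] := zdecomp _ _ pr u00.
have [w [hw ew]] := zdecomp _ _ pr (denq_neq0 q).
set al := zval p a in ea em.
set d := zval p (numq q) in eu.
set c := zval p (denq q) in ew.
set k' := `|k|%N.
set N := (c + m + 1)%N.
set E := (d + n * N - c - n * m)%N.
set L := (k' + n * N - n * m)%N.
set phi := totient (p ^ L).
have phi0 : (0 < phi)%N by rewrite totient_gt0 expn_gt0 prime_gt0.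
set V := u * a' * P ^+ E - w * b'.
set g := (w * a') ^+ phi.-1.
set h := V * g.
have cnphi : coprime n phi.
  rewrite /phi; case: (L) => [|L']; first by rewrite expn0 /= coprimen1.
  by rewrite totient_pfactor // coprimeMr cnp1 coprimeXr.
have [e [t het]] : exists e t, (e * n = t * phi + 1)%N.
  case: (egcdnP phi n0) => km kn h1 _; exists km, kn.
  by rewrite h1; move: cnphi; rewrite /coprime => /eqP ->.
set Z := h ^+ e.
exists (P ^+ m * Z), 1, (P ^+ N), 0.
have hnc : (c <= n * c)%N by rewrite leq_pmull.
have hN : (n * N = n * c + n * m + n)%N by rewrite /N !mulnDr muln1.
have hE : (d + n * N = c + n * m + E)%N.
  by rewrite /E hN; apply: A1.
have E0 : (0 < E)%N by rewrite /E hN; apply: A2.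
have hwa : ~~ (P %| w * a')%Z by rewrite zpM // negb_or hw ha'.
have hV : ~~ (P %| V)%Z.
  apply: contra hb' => hV.
  have : (P %| u * a' * P ^+ E - V)%Z.
    by apply: rpredB => //; apply: dvdz_mull; apply: dvdz_exp => //; exact: dvdzz.
  rewrite /V opprB addrC subrK zpM // => /orP [] // /(negP hw).
  done.
have hg : ~~ (P %| g)%Z by apply: contra hwa; apply: zpX.
have hh : ~~ (P %| h)%Z by rewrite zpM // negb_or hV hg.
have HZ : (Z ^+ n = h %[mod P ^+ L])%Z.
  rewrite /Z -exprM het exprD expr1 mulnC exprM.
  by rewrite -modzMml -modzXm zEuler // modzXm expr1n modzMml mul1r.
have HW : (w * a' * Z ^+ n = V %[mod P ^+ L])%Z.
  rewrite -modzMmr HZ modzMmr.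
  have -> : w * a' * h = V * (w * a') ^+ phi.
    by rewrite /h /g -{2}(prednK phi0) exprS; ring.
  by rewrite -modzMmr zEuler // modzMmr mulr1.
have HD : (P ^+ L %| w * a' * Z ^+ n - V)%Z by rewrite -eqz_mod_dvd; apply/eqP.
have Fy0 : a * (P ^+ N) ^+ n + b * 0 ^+ n != 0.
  by rewrite expr0n n0' mulr0 addr0 mulf_neq0 // !expf_neq0.
split => //.
set Fx := a * (P ^+ m * Z) ^+ n + b * 1 ^+ n.
set Fy := a * (P ^+ N) ^+ n + b * 0 ^+ n.
set D := Fx * denq q - numq q * Fy.
have eD : D = P ^+ (c + al + n * m) * (w * a' * Z ^+ n - V).
  rewrite /D /Fx /Fy expr0n n0' mulr0 addr0 expr1n mulr1 exprMn -!(exprM P).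
  rewrite eb em ea eu ew !exprD (mulnC m n) (mulnC N n).
  apply: key_id; by rewrite -!exprD hE.
have Fyw : Fy * denq q = (a' * w) * P ^+ (al + n * N + c).
  rewrite /Fy expr0n n0' mulr0 addr0 -exprM ea ew !exprD (mulnC N n); ring.
have eS : (Fx%:~R / Fy%:~R - q : rat) = D%:~R / (Fy * denq q)%:~R.
  rewrite -{1}(divq_num_den q) /D rmorphB !rmorphM /=.
  have : (Fy%:~R : rat) != 0 by rewrite intr_eq0.
  have : ((denq q)%:~R : rat) != 0 by rewrite intr_eq0 denq_neq0.
  move=> h1 h2; field; by rewrite h1 h2.
rewrite eS.
have [D0|D0] := eqVneq D 0.
  by left; apply/eqP; rewrite -subr_eq0 eS D0 mul0r.
right.
have aw0 : a' * w != 0 by apply: contraNneq hwa; rewrite mulrC => ->; exact: dvdz0.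
rewrite padic_ratio //; last by rewrite Fyw mulf_neq0 ?expf_neq0.
rewrite Fyw zval_unit //; last by rewrite zpM // negb_or ha' hw.
have hdiv : (P ^+ (al + n * N + c + k') %| D)%Z.
  have -> : (al + n * N + c + k' = (c + al + n * m) + L)%N.
    by rewrite /L hN; apply: A3.
  by rewrite exprD eD; apply: dvdz_mul => //; exact: dvdzz.
have : (al + n * N + c + k' <= zval p D)%N.
  rewrite /zval -pfactor_dvdn ?absz_gt0 //.
  by move: hdiv; rewrite dvdzE abszX.
exact: A4.
Qed.

Lemma gen (n p : nat) (a b : int) (q : rat) (k : int) :
  (0 < n)%N -> prime p -> coprime n p -> coprime n (p.-1) -> a != 0 -> b != 0 ->
  zval p a = zval p b %[mod n] ->
  exists X Y X' Y' : int, a * X'^+n + b * Y'^+n != 0 /\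
   (((a*X^+n + b*Y^+n)%:~R / (a*X'^+n+b*Y'^+n)%:~R : rat) = q \/
     k <= padic_val p ((a*X^+n + b*Y^+n)%:~R / (a*X'^+n+b*Y'^+n)%:~R - q)).
Proof.
move=> n0 pr c1 c2 a0 b0 cg.
case: (leqP (zval p a) (zval p b)) => hl; first exact: core.
have [X [Y [X' [Y' [H1 H2]]]]] := core _ _ _ _ q k n0 pr c1 c2 b0 a0 (ltnW hl) (esym cg).
by exists Y, X, Y', X'; rewrite ![a * _ + _]addrC.
Qed.

Theorem corollary1p2 (n p : nat) :
  (3 <= n)%N -> prime p -> coprime n (p * (p - 1)) ->
  (forall a b : int, a * b != 0 ->
     zval p a = zval p b %[mod n] ->
     dense_in_Qp p (ratio_set (binary_form n a b)))
  /\
  (forall (r : nat) (a : 'I_r -> int), (2 <= r)%N ->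
     (forall i, a i != 0) ->
     (exists i j : 'I_r, (i < j)%N /\ zval p (a i) = zval p (a j) %[mod n]) ->
     dense_in_Qp p (ratio_set (diag_form n a))).
Proof.
move=> n3 pr; rewrite coprimeMr subn1 => /andP [c1 c2].
have n0 : (0 < n)%N by apply: leq_trans n3.
split.
  move=> a b; rewrite mulf_eq0 negb_or => /andP [a0 b0] cg q k.
  have [X [Y [X' [Y' [H1 H2]]]]] := gen _ _ _ _ q k n0 pr c1 c2 a0 b0 cg.
  eexists; split; last exact: H2.
  exists (fun i => if i == ord0 then X else Y), (fun i => if i == ord0 then X' else Y').
  by rewrite /binary_form /=.
move=> r a r2 a0 [i [j [ij cg]]] q k.
have [X [Y [X' [Y' [H1 H2]]]]] := gen _ _ _ _ q k n0 pr c1 c2 (a0 i) (a0 j) cg.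
have ji : j != i by rewrite neq_ltn ij orbT.
have F : forall U W, diag_form n a (fun l => if l == i then U else if l == j then W else 0)
   = a i * U ^+ n + a j * W ^+ n.
  move=> U W; rewrite /diag_form (bigD1 i) //= eqxx (bigD1 j) //= eqxx (negbTE ji).
  rewrite big1 ?addr0 // => l /andP [li lj].
  by rewrite (negbTE li) (negbTE lj) expr0n; case: (n) n0 => // n' _; rewrite mulr0.
eexists; split; last exact: H2.
exists (fun l => if l == i then X else if l == j then Y else 0),
       (fun l => if l == i then X' else if l == j then Y' else 0).
by rewrite !F.
Qed.
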